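(* Let $d$ be an odd prime, $n\in\mathbb{N}$, $A$ a multiplicative abelian group with an embedding $\zeta:\mathbb{Z}_d\to A$, and $W_1,W_2\in M_n(\mathbb{Z}_d)$ such that $\Omega_i=W_i-W_i^T$ has full rank over $\mathbb{Z}_d$ (i.e. is a symplectic form) for $i=1,2$. Then the polar commutator groups $\mathcal{G}_d^n(A,\zeta,W_1)$ and $\mathcal{G}_d^n(A,\zeta,W_2)$ are isomorphic.
   Context: An embedding $\zeta:\mathbb{Z}_d\to A$ is an injective group homomorphism. Let $F\subseteq A$ be a fixed set of representatives of $A/\zeta(\mathbb{Z}_d)$ with $1\in F$, and $r:A\to F$, $u:A\to\mathbb{Z}_d$ the maps with $a=r(a)\zeta(u(a))$. For $W\in M_n(\mathbb{Z}_d)$, $\mathcal{G}_d^n(A,\zeta,W)$ is the set $F\times\mathbb{Z}_d\times\mathbb{Z}_d^n$ with multiplication $(a,p,x)\cdot(b,q,y)=(r(ab),\,u(ab)+p+q+x^TWy,\,x+y)$. *)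

(* Defs.v *)
From HB Require Import structures.
From mathcomp Require Import all_boot all_order all_algebra.
Set Implicit Arguments. Unset Strict Implicit. Unset Printing Implicit Defensive.
Import GRing.Theory.
Local Open Scope ring_scope.

(* The abelian group A is written additively (A : zmodType); its unit 1 is 0.
   Z_d is 'F_d (equal to Z/dZ since d is prime).  Vectors of Z_d^n are
   column vectors 'cV['F_d]_n. *)

Definition embedding (d : nat) (A : zmodType) (zeta : 'F_d -> A) : Prop :=
  (forall p q, zeta (p + q) = zeta p + zeta q) /\ injective zeta.

Definition rep_system (d : nat) (A : zmodType) (zeta : 'F_d -> A)
  (F : A -> Prop) (r : A -> A) (u : A -> 'F_d) : Prop :=
  [/\ F 0,
      (forall a b, F a -> F b -> (exists k, a = b + zeta k) -> a = b),
      (forall a, exists f k, F f /\ a = f + zeta k),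
      (forall a, F (r a)) &
      (forall a, a = r a + zeta (u a))].

(* Underlying type of G_d^n(A, zeta, W); the group itself is the subset of
   elements whose first component lies in F. *)
Definition Gtype (d n : nat) (A : zmodType) := (A * 'F_d * 'cV['F_d]_n)%type.

Definition Gmem (d n : nat) (A : zmodType) (F : A -> Prop) (g : Gtype d n A) : Prop :=
  F g.1.1.

Definition Gmul (d n : nat) (A : zmodType) (r : A -> A) (u : A -> 'F_d)
  (W : 'M['F_d]_n) (g h : Gtype d n A) : Gtype d n A :=
  let: (a, p, x) := g in
  let: (b, q, y) := h in
  (r (a + b), u (a + b) + p + q + ((x^T *m W *m y) 0 0), x + y).

Definition group_iso (T : Type) (G1 G2 : T -> Prop) (mul1 mul2 : T -> T -> T) : Prop :=
  exists phi : T -> T,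
    [/\ (forall g, G1 g -> G2 (phi g)),
        (forall g h, G1 g -> G1 h -> phi g = phi h -> g = h),
        (forall h, G2 h -> exists g, G1 g /\ phi g = h) &
        (forall g h, G1 g -> G1 h -> phi (mul1 g h) = mul2 (phi g) (phi h))].

(* Main.v *)
From HB Require Import structures.
From mathcomp Require Import all_boot all_order all_algebra all_fingroup ring.
Require Import Defs.
Set Implicit Arguments. Unset Strict Implicit. Unset Printing Implicit Defensive.
Import GRing.Theory.
Local Open Scope ring_scope.

Section Sympl.
Variable F : fieldType.
Hypothesis two : (2 : F) != 0.

Definition bil n (B : 'M[F]_n) (x y : 'cV[F]_n) : F := (x^T *m B *m y) 0 0.
Definition skew n (A : 'M[F]_n) := A^T = - A.

Lemma bilDl n (B : 'M[F]_n) x1 x2 y : bil B (x1 + x2) y = bil B x1 y + bil B x2 y.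
Proof. by rewrite /bil linearD /= !mulmxDl mxE. Qed.
Lemma bilDr n (B : 'M[F]_n) x y1 y2 : bil B x (y1 + y2) = bil B x y1 + bil B x y2.
Proof. by rewrite /bil !mulmxDr mxE. Qed.
Lemma bilZl n (B : 'M[F]_n) a x y : bil B (a *: x) y = a * bil B x y.
Proof. by rewrite /bil linearZ /= -!scalemxAl mxE. Qed.
Lemma bilZr n (B : 'M[F]_n) a x y : bil B x (a *: y) = a * bil B x y.
Proof. by rewrite /bil -!scalemxAr mxE. Qed.
Lemma bilNl n (B : 'M[F]_n) x y : bil B (- x) y = - bil B x y.
Proof. by rewrite -scaleN1r bilZl mulN1r. Qed.
Lemma bilNr n (B : 'M[F]_n) x y : bil B x (- y) = - bil B x y.
Proof. by rewrite -scaleN1r bilZr mulN1r. Qed.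
Lemma bil_tr n (B : 'M[F]_n) x y : bil B x y = bil B^T y x.
Proof.
rewrite /bil; have -> : (x^T *m B *m y) 0 0 = (trmx (x^T *m B *m y)) 0 0 by rewrite [in RHS]mxE.
by rewrite !trmx_mul trmxK mulmxA.
Qed.
Lemma bil_delta n (B : 'M[F]_n) i j : bil B (delta_mx i 0) (delta_mx j 0) = B i j.
Proof.
by rewrite /bil trmx_delta -rowE -colE !mxE.
Qed.
Lemma congr_entry n (A P : 'M[F]_n) i j :
  (P^T *m A *m P) i j = bil A (col i P) (col j P).
Proof.
rewrite !colE /bil trmx_mul !mulmxA -(bil_delta (P^T *m A *m P)) /bil !mulmxA //.
Qed.
Lemma bil_skew n (A : 'M[F]_n) x y : skew A -> bil A x y = - bil A y x.
Proof.
move=> sA; rewrite bil_tr sA /bil mulmxN mulNmx mxE //.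
Qed.
Lemma bil_alt n (A : 'M[F]_n) x : skew A -> bil A x x = 0.
Proof.
move=> sA; have h := bil_skew x x sA.
have : 2 * bil A x x = 0 by rewrite mulr2n mulrDl mul1r {1}h addNr.
by move/eqP; rewrite mulf_eq0 (negPf two) /= => /eqP.
Qed.
Lemma skew_congr n (A P : 'M[F]_n) : skew A -> skew (P^T *m A *m P).
Proof. by move=> sA; rewrite /skew !trmx_mul trmxK !mulmxA sA mulmxN mulNmx. Qed.


Lemma skew_diag n (A : 'M[F]_n) i : skew A -> A i i = 0.
Proof. by move=> sA; rewrite -bil_delta bil_alt. Qed.

Lemma unit_row_nz m (A : 'M[F]_m.+1) : A \in unitmx -> exists k, A 0 k != 0.
Proof.
move=> uA; case: (boolP [exists k, A 0 k != 0]) => [/existsP//|/existsPn h].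
exfalso.
have r0 : row 0 A = 0 by apply/matrixP => i j; rewrite !mxE; apply/eqP/negPn/h.
have : row 0 (A *m invmx A) = 0 by rewrite row_mul r0 mul0mx.
rewrite mulmxV // => /matrixP /(_ 0 0); rewrite !mxE /= => /eqP; by rewrite oner_eq0.
Qed.

Lemma unit_congr n (A P : 'M[F]_n) : A \in unitmx -> P \in unitmx -> P^T *m A *m P \in unitmx.
Proof. by move=> uA uP; rewrite !unitmx_mul unitmx_tr uA uP. Qed.

Lemma stepA m (A : 'M[F]_m.+2) : skew A -> A \in unitmx ->
  exists P : 'M[F]_m.+2, P \in unitmx /\ (P^T *m A *m P) 0 1 != 0.
Proof.
move=> sA uA; have [k hk] := unit_row_nz uA.
have k0 : (0 : 'I_m.+2) != k by apply: contraNneq hk => <-; rewrite skew_diag.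
pose s := tperm (1 : 'I_m.+2) k.
exists (perm_mx s); split; first exact: unitmx_perm.
have h : A *m perm_mx s = col_perm s^-1 A by rewrite col_permE invgK.
rewrite tr_perm_mx -mulmxA h -row_permE tpermV.
by rewrite !mxE /s tpermL tpermD // eq_sym.
Qed.

Section StepB.
Variable m : nat.
Variable B : 'M[F]_m.+2.
Hypothesis sB : skew B.
Hypothesis hc : B 0 1 != 0.

Definition e0 : 'cV[F]_m.+2 := delta_mx 0 0.
Definition fv : 'cV[F]_m.+2 := (B 0 1)^-1 *: delta_mx 1 0.
Definition piv v := v + bil B fv v *: e0 - bil B e0 v *: fv.
Definition colv (j : 'I_m.+2) :=
  if (j : nat) == 0%N then e0 else if (j : nat) == 1%N then fv else piv (delta_mx j 0).
Definition Rm : 'M[F]_m.+2 := \matrix_(i, j) colv j i 0.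

Lemma col_Rm j : col j Rm = colv j.
Proof. by apply/matrixP => i k; rewrite !mxE (ord1 k). Qed.

Lemma colv_ge2 (j : 'I_m.+2) : (2 <= j)%N -> colv j = piv (delta_mx j 0).
Proof. by rewrite /colv; case: j => [[|[|j]] ?]. Qed.

Lemma bil_ee : bil B e0 e0 = 0. Proof. exact: bil_alt. Qed.
Lemma bil_ff : bil B fv fv = 0. Proof. exact: bil_alt. Qed.
Lemma bil_ef : bil B e0 fv = 1.
Proof. by rewrite /fv bilZr /e0 bil_delta mulVf. Qed.
Lemma bil_fe : bil B fv e0 = -1.
Proof. by rewrite bil_skew // bil_ef. Qed.
Lemma bil_epi v : bil B e0 (piv v) = 0.
Proof. by rewrite /piv bilDr bilNr bilDr (bilZr _ _ e0 e0) (bilZr _ _ e0 fv) bil_ee bil_ef; ring. Qed.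
Lemma bil_fpi v : bil B fv (piv v) = 0.
Proof. by rewrite /piv bilDr bilNr bilDr (bilZr _ _ fv e0) (bilZr _ _ fv fv) bil_fe bil_ff; ring. Qed.

Lemma Rm_unit : Rm \in unitmx.
Proof.
rewrite -unitmx_tr unitmxE det_trig.
  rewrite unitfE; apply/prodf_neq0 => i _; rewrite !mxE.
  case: i => [[|[|i]] Hi]; rewrite /colv /= ?/e0 ?/fv ?/piv ?mxE /=.
  - exact: oner_neq0.
  - by rewrite mulr1 invr_eq0.
  - by rewrite !eqxx !mulr0 subr0 addr0 oner_neq0.
apply/forallP => i; apply/forallP => j; apply/implyP => lij; rewrite !mxE.
case: i lij => [[|[|i]] Hi] lij; rewrite /colv /= ?/e0 ?/fv ?/piv !mxE /=.
all: case: j lij => [[|[|j]] Hj] //= lij.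
all: rewrite ?mulr0 ?subr0 ?addr0 //=.
by rewrite -val_eqE /= (gtn_eqF lij).
Qed.

Definition C := locked (Rm^T *m B *m Rm).
Lemma C_entry i j : C i j = bil B (colv i) (colv j).
Proof. by rewrite /C -lock congr_entry !col_Rm. Qed.
Lemma C_skew : skew C.
Proof. rewrite /C -lock; exact: skew_congr. Qed.
Lemma C_sk i j : C i j = - C j i.
Proof. by move: C_skew => /matrixP /(_ j i); rewrite !mxE. Qed.

Definition J2 : 'M[F]_2 := \matrix_(i, j)
  (if ((i:nat) == 0%N) && ((j:nat) == 1%N) then 1
   else if ((i:nat) == 1%N) && ((j:nat) == 0%N) then -1 else 0).

Lemma C_block : (C : 'M_(2 + m)) = block_mx J2 0 0 (drsubmx (C : 'M_(2 + m))).
Proof.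
rewrite -[X in X = _](submxK (C : 'M_(2+m))).
have ur (i : 'I_2) (j : 'I_m) : (C : 'M_(2+m)) (lshift m i) (rshift 2 j) = 0.
  rewrite C_entry (@colv_ge2 (rshift 2 j)) ?leq_addr //.
  case: i => [[|[|i]] Hi] //; rewrite /colv /=.
    exact: bil_epi.
  exact: bil_fpi.
congr block_mx; apply/matrixP => i j; rewrite !mxE.
- rewrite C_entry.
  case: i => [[|[|i]] Hi] //; case: j => [[|[|j]] Hj] //; rewrite /colv /=.
  + exact: bil_ee.
  + exact: bil_ef.
  + exact: bil_fe.
  + exact: bil_ff.
- exact: ur.
- by rewrite C_sk ur oppr0.
Qed.
End StepB.

Lemma reduce m (A : 'M[F]_m.+2) : skew A -> A \in unitmx ->
  exists (P : 'M[F]_m.+2) (A' : 'M[F]_m),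
  [/\ P \in unitmx, skew A', A' \in unitmx &
      (P^T *m A *m P : 'M_(2 + m)) = block_mx J2 0 0 A'].
Proof.
move=> sA uA; have [P0 [uP0 hc]] := stepA sA uA.
set B := P0^T *m A *m P0 in hc.
have sB : skew B by exact: skew_congr.
have uB : B \in unitmx by exact: unit_congr.
have eqC : (P0 *m Rm B)^T *m A *m (P0 *m Rm B) = C B.
  by rewrite /C -lock trmx_mul !mulmxA.
exists (P0 *m Rm B), (drsubmx (C B : 'M_(2 + m))); split.
- by rewrite unitmx_mul uP0 Rm_unit.
- rewrite /skew trmx_drsub (C_skew sB).
  by apply/matrixP => i j; rewrite !mxE.
- have uC : (C B : 'M_(2+m)) \in unitmx.
    by rewrite -eqC unit_congr // unitmx_mul uP0 Rm_unit.
  rewrite (C_block sB hc) in uC; move: uC; rewrite !unitmxE det_ublock unitrM; by case/andP.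
- apply: (etrans eqC); exact: (C_block sB hc).
Qed.

Lemma sympl_congr n (A1 A2 : 'M[F]_n) : skew A1 -> skew A2 ->
  A1 \in unitmx -> A2 \in unitmx -> exists M, M \in unitmx /\ M^T *m A2 *m M = A1.
Proof.
elim/ltn_ind: n A1 A2 => n IH A1 A2 s1 s2 u1 u2.
case: n IH A1 A2 s1 s2 u1 u2 => [|[|m]] IH A1 A2 s1 s2 u1 u2.
- exists 1%:M; split; first exact: unitmx1.
  by apply/matrixP => -[].
- have A10 : A1 = 0 by apply/matrixP => i j; rewrite !ord1 skew_diag // mxE.
  by move: u1; rewrite A10 unitmxE det0 unitr0.
have [P1 [A1' [uP1 s1' u1' e1]]] := reduce s1 u1.
have [P2 [A2' [uP2 s2' u2' e2]]] := reduce s2 u2.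
have [M' [uM' eM']] := IH m (leqnSn m.+1) A1' A2' s1' s2' u1' u2'.
pose D : 'M[F]_(2 + m) := block_mx 1%:M 0 0 M'.
exists (P2 *m D *m invmx P1); split.
  have uD : D \in unitmx by rewrite unitmxE /D det_ublock det1 mul1r -unitmxE.
  by rewrite !unitmx_mul uP2 unitmx_inv uP1 andbT uD.
have eD : D^T *m (P2^T *m A2 *m P2 : 'M_(2 + m)) *m D = (P1^T *m A1 *m P1 : 'M_(2+m)).
  rewrite e2 e1 /D tr_block_mx !mulmx_block !trmx0 trmx1.
  rewrite !(mul1mx, mul0mx, mulmx0, mulmx1, addr0, add0r) eM' //.
rewrite !trmx_mul !mulmxA.
have -> : (invmx P1)^T *m D^T *m P2^T *m A2 *m P2 *m D =
  (invmx P1)^T *m (D^T *m (P2^T *m A2 *m P2 : 'M_(2 + m)) *m D) by rewrite !mulmxA.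
rewrite eD !mulmxA -trmx_mul mulmxV // trmx1 mul1mx -mulmxA mulmxV // mulmx1 //.
Qed.
End Sympl.

Lemma bil_addB (F : fieldType) n (B1 B2 : 'M[F]_n) x y : bil (B1 + B2) x y = bil B1 x y + bil B2 x y.
Proof. by rewrite /bil mulmxDr mulmxDl mxE. Qed.
Lemma bil_congr (F : fieldType) n (B M : 'M[F]_n) x y : bil (M^T *m B *m M) x y = bil B (M *m x) (M *m y).
Proof. by rewrite /bil trmx_mul !mulmxA. Qed.

Lemma two_Fp d : prime d -> odd d -> (2 : 'F_d) != 0.
Proof.
move=> pd od; apply/eqP => h; have h2 : (2%:R : 'F_d) = 0 := h; have := congr1 (@nat_of_ord _) h2; rewrite val_Fp_nat //=.
have d2 : (2 < d)%N.
  have := prime_gt1 pd; rewrite leq_eqVlt => /orP [/eqP d2|//].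
  by rewrite -d2 in od.
by rewrite modn_small.
Qed.

Lemma bil_oppB (F : fieldType) n (B : 'M[F]_n) x y : bil (- B) x y = - bil B x y.
Proof. by rewrite /bil mulmxN mulNmx mxE. Qed.

Lemma zmod4 (V : zmodType) (a b c e : V) : a - b - (c - e) = (a - c) - (b - e).
Proof. by rewrite opprB addrACA [in RHS]opprB [in RHS]addrACA [- c + _]addrC. Qed.

Theorem proposition22 (d n : nat) (A : zmodType) (zeta : 'F_d -> A)
  (F : A -> Prop) (r : A -> A) (u : A -> 'F_d) (W1 W2 : 'M['F_d]_n) :
  prime d -> odd d ->
  embedding zeta ->
  rep_system zeta F r u ->
  \rank (W1 - W1^T) = n ->
  \rank (W2 - W2^T) = n ->
  group_iso (Gmem (n:=n) (d:=d) F) (Gmem (n:=n) (d:=d) F) (Gmul r u W1) (Gmul r u W2).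
Proof.
move=> pd od _ _ rk1 rk2.
have two := two_Fp pd od.
have sk (W : 'M['F_d]_n) : skew (W - W^T) by rewrite /skew linearB /= trmxK opprB.
have un (W : 'M['F_d]_n) : \rank (W - W^T) = n -> (W - W^T) \in unitmx.
  by move=> h; rewrite -row_free_unit /row_free h.
have [M [uM eM]] := sympl_congr two (sk W1) (sk W2) (un _ rk1) (un _ rk2).
pose K := M^T *m W2 *m M - W1.
have KT : K^T = K.
  have e : M^T *m W2 *m M - M^T *m W2^T *m M = W1 - W1^T by rewrite -eM mulmxBr mulmxBl.
  apply/eqP; rewrite -subr_eq0; apply/eqP.
  by rewrite /K linearB /= !trmx_mul trmxK !mulmxA zmod4 -(opprB (M^T *m W2 *m M)) -(opprB W1) e subrr.
pose S := (2%:R : 'F_d)^-1 *: K.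
have SK : S + S^T = K.
  have h2 : ((2%:R : 'F_d)^-1 + (2%:R : 'F_d)^-1) = 1.
    by field.
  by rewrite /S linearZ /= KT -scalerDl h2 scale1r.
have key x y : bil W1 x y + bil S (x + y) (x + y) = bil S x x + bil S y y + bil W2 (M *m x) (M *m y).
  have hK : bil S x y + bil S y x = bil W2 (M *m x) (M *m y) - bil W1 x y.
    rewrite (bil_tr S y x) -bil_addB SK /K bil_addB.
    by rewrite bil_oppB bil_congr.
  rewrite bilDl !bilDr.
  have -> : bil S y x = bil W2 (M *m x) (M *m y) - bil W1 x y - bil S x y by rewrite -hK; ring.
  ring.
exists (fun g : Gtype d n A => (g.1.1, g.1.2 + bil S g.2 g.2, M *m g.2)); split.
- by move=> [[a p] x].
- move=> [[a p] x] [[b q] y] _ _ e.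
  have /= ha := congr1 (fun g => g.1.1) e.
  have /= hp := congr1 (fun g => g.1.2) e.
  have /= hx := congr1 (fun g => g.2) e.
  rewrite ha.
  have exy : x = y by rewrite -(mulKmx uM x) hx mulKmx.
  by rewrite exy in hp *; rewrite (addIr _ hp).
- move=> [[a q] y] Fa; exists (a, q - bil S (invmx M *m y) (invmx M *m y), invmx M *m y).
  by split => //=; rewrite subrK mulKVmx.
- move=> [[a p] x] [[b q] y] _ _ /=.
  rewrite mulmxDr; congr (_, _, _).
  rewrite -/(bil W1 x y) -/(bil W2 (M *m x) (M *m y)).
  have := key x y; move=> k.
  transitivity (u (a + b) + p + q + (bil W1 x y + bil S (x + y) (x + y))); first by ring.
  rewrite k; ring.
Qed.
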